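(* Let $\mathcal{G}$ be a g-sequent, $C$ a constraint, and $\mathrm{H}:=\mathrm{H}(\mathbf{G}(C))$. If $\mathrm{H}'$ is a fracturable subset of $\mathrm{H}$ (in $\mathsf{DG}(\mathrm H)$) and $\mathcal{G}$ satisfies $C$, then $\overline{\mathrm{H}'}(\mathcal{G})$ satisfies $C\ominus\mathbf{G}(\mathrm{H}')$.
   Context: Fix a countably infinite set $\mathtt{S}$ of sequents (atomic labels), a set $\mathcal{U}$ of vertices, and a non-empty finite set $\mathtt{E}$ of edge types. A g-sequent is $\mathcal{G}=(\mathcal{V},\mathcal{E},\mathcal{L})$ with $\mathcal{V}\subseteq\mathcal{U}$, $\mathcal{E}=\{\mathcal{E}_a\mid a\in\mathtt{E}\}$, $\mathcal{E}_a\subseteq\mathcal{V}\times\mathcal{V}$, $\mathcal{L}:\mathcal{V}\to\mathtt{S}$; $\mathcal U(\mathcal G)=\mathcal V$; written $\Gamma\vdash\Delta$ with $\Gamma$ the set of edge atoms $w\mathcal{E}_a u$ and $\Delta$ the set of prefixed sequents $w:S$; commas denote disjoint union. Let $\overline{\mathtt E}=\{\bar a\mid a\in\mathtt E\}$, $\bar{\bar z}=z$, $\overline{x_1\cdots x_n}=\bar x_n\cdots\bar x_1$, $\varepsilon$ empty string. Paths: $\mathcal{G}\models u\xrightarrow{a}w$ iff $(u,w)\in\mathcal{E}_a$; $u\xrightarrow{\bar a}w$ iff $(w,u)\in\mathcal{E}_a$; $u\xrightarrow{\varepsilon}w$ iff $u=w$; $u\xrightarrow{xs}w$ iff some $v$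 has $u\xrightarrow{x}v$, $v\xrightarrow{s}w$; $u\xrightarrow{\mathscr L}w$ iff $u\xrightarrow{s}w$ for some $s\in\mathscr L$. An $\mathtt E$-system is a finite set $\mathbf G$ of production rules $x\longrightarrow t$ ($x\in\mathtt E\cup\overline{\mathtt E}$, $t$ a string) such that $x\longrightarrow t\in\mathbf G$ iff $\bar x\longrightarrow\bar t\in\mathbf G$; $\mathbf G(s)=\{t\mid s\longrightarrow^*_{\mathbf G}t\}$ ($\longrightarrow^*_{\mathbf G}$: reflexive-transitive closure of rewriting one occurrence of a left side). For $p=x\longrightarrow t$, $\bar p=\bar x\longrightarrow\bar t$; $(p,\bar p)$ is a production pair; $P(\mathbf G)$ is the set of production pairs in $\mathbf G$. A constraint is a finite tree $C=(V,E,L)$, $V\subseteq\mathcal U$, each edge labelled $L(w,u)=\mathbf G'(a)$ for some $a\in\mathtt E$ and $\mathtt E$-system $\mathbf G'$ (which is said to participate in $C$); $\mathbf G(C)$ is the union of all $\mathtt E$-systems participating in $C$. $\mathcal G$ satisfies $C$ iff $V\subseteq\mathcal U(\mathcal G)$ and $\mathcal G\models w\xrightarrow{\mathbf G'(a)}u$ for every edge with $L(w,u)=\mathbf G'(a)$. Fracture: $C\ominus\mathbf G$ replaces every label $\mathbf G'(a)$ by $(\mathbf G'\setminus\mathbf G)(a)$. Horn rules: for $s=x_1\cdots x_n$, $w\mathcal E_s u$ abbreviates atoms $w\mathcal E_{x_1}v_1,\dots,v_{n-1}\mathcal E_{x_n}u$, with $v\mathcal E_{\bar a}z$ meaning $z\mathcal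 E_a v$ and $w\mathcal E_\varepsilon u$ meaning $w=u$. Forward Horn rule $h_f$: premise $\Gamma,w\mathcal{E}_s u,w\mathcal{E}_a u\vdash\Delta$, conclusion $\Gamma,w\mathcal{E}_s u\vdash\Delta$; backward Horn rule $h_b$: same with $w\mathcal E_a u$ replaced by $u\mathcal E_a w$. $\mathbf{G}(h_f)=\{a\longrightarrow s,\bar a\longrightarrow\bar s\}$, $\mathbf{G}(h_b)=\{\bar a\longrightarrow s,a\longrightarrow\bar s\}$, $\mathbf G(\mathrm H)=\bigcup_{h\in\mathrm H}\mathbf G(h)$, $P(h)=P(\mathbf G(h))$. For a production pair $(p,\bar p)$ with $p=a\longrightarrow s$ (resp. $p=\bar a\longrightarrow s$), $a\in\mathtt E$, $\mathrm H(p,\bar p)$ is the singleton of the corresponding forward (resp. backward) Horn rule; $\mathrm H(\mathbf G)=\bigcup_{(p,\bar p)\in P(\mathbf G)}\mathrm H(p,\bar p)$. Dependency graph: for distinct production pairs with $p=x\longrightarrow s$, $p'=y\longrightarrow t$, $(p,\bar p)\sqsubset(p',\bar p')$ iff $s$ or $\bar s$ contains the letter $y$; $\sqsubseteq$ is the reflexive-transitive closure. For Horn rules, $\mathsf{DG}(\mathrm H)=(\mathrm H,\sqsubseteq')$ with $h\sqsubseteq' h'$ iff the production pair of $h$ is $\sqsubseteq$ the production pair of $h'$. A subset $V'$ of a dependency graph $(V,\sqsubseteq)$ is fracturable iff there are no $v\in V'$, $v'\in V\setminus V'$ with $v\sqsubseteq v'$. Saturation: the inverse $\bar h$ of a Horn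 rule $h$ maps the conclusion of an instance of $h$ to its premise (adds the edge atom). $\overline{\mathrm H'}(\mathcal G)$ is obtained from $\mathcal G$ by repeatedly applying inverses of rules in $\mathrm H'$ as long as this changes the g-sequent. *)

(* Defs.v *)
From mathcomp Require Import all_boot.
From Stdlib Require List.

Set Implicit Arguments.
Unset Strict Implicit.
Unset Printing Implicit Defensive.

(* Letters of E ∪ Ē : (a, false) is a, (a, true) is ā.                    *)
Notation letter E := (E * bool)%type.
Notation rule E := (letter E * seq (letter E))%type.

Section Defs.
Variable E : finType.

Definition barl (x : letter E) : letter E := (x.1, ~~ x.2).
Definition bars (s : seq (letter E)) : seq (letter E) := rev (map barl s).
Definition barr (p : rule E) : rule E := (barl p.1, bars p.2).

Definition is_system (G : seq (rule E)) : Prop :=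
  forall p, p \in G -> barr p \in G.

Inductive rtc {T : Type} (R : T -> T -> Prop) : T -> T -> Prop :=
| rtc_refl x : rtc R x x
| rtc_step x y z : R x y -> rtc R y z -> rtc R x z.

Definition rewrite1 (G : seq (rule E)) (s t : seq (letter E)) : Prop :=
  exists s1 s2 x r, (x, r) \in G /\ s = s1 ++ x :: s2 /\ t = s1 ++ r ++ s2.

Definition lang (G : seq (rule E)) (s t : seq (letter E)) : Prop :=
  rtc (rewrite1 G) s t.

Variables U S : Type.

(* g-sequents (V, {E_a}, L) ; the vertex set is a predicate on U *)
Record gseq := GSeq {
  gvert : U -> Prop;
  gedge : E -> U -> U -> Prop;
  glab  : U -> S }.

Definition is_gseq (G : gseq) : Prop :=
  forall a w u, gedge G a w u -> gvert G w /\ gvert G u.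

Definition ledge (R : E -> U -> U -> Prop) (x : letter E) (w v : U) : Prop :=
  if x.2 then R x.1 v w else R x.1 w v.

Fixpoint walk (R : E -> U -> U -> Prop) (s : seq (letter E)) (w u : U) : Prop :=
  match s with
  | [::] => w = u
  | x :: s' => exists v, ledge R x w v /\ walk R s' v u
  end.

Definition models_lang (G : gseq) (G' : seq (rule E)) (a : E) (w u : U) : Prop :=
  exists t, lang G' [:: (a, false)] t /\ walk (gedge G) t w u.

(* Constraints: finite trees whose edges (w,u) are labelled by G'(a),
   stored as the pair (G', a). *)
Record constr := Constr {
  cverts : seq U;
  cedges : seq (U * U * (seq (rule E) * E)) }.

Definition cadj (C : constr) (x y : U) : Prop :=
  exists l, List.In (x, y, l) (cedges C) \/ List.In (y, x, l) (cedges C).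

Definition is_tree (C : constr) : Prop :=
  [/\ cverts C <> [::],
      List.NoDup (cverts C),
      (forall w u l, List.In (w, u, l) (cedges C) ->
          List.In w (cverts C) /\ List.In u (cverts C)),
      (forall x y, List.In x (cverts C) -> List.In y (cverts C) -> rtc (cadj C) x y)
    & size (cedges C) = (size (cverts C)).-1 ].

Definition is_constraint (C : constr) : Prop :=
  is_tree C /\ (forall w u G' a, List.In (w, u, (G', a)) (cedges C) -> is_system G').

Definition sys_of_constr (C : constr) : seq (rule E) :=
  flatten (map (fun e => e.2.1) (cedges C)).

Definition satisfies (G : gseq) (C : constr) : Prop :=
  (forall v, List.In v (cverts C) -> gvert G v) /\
  (forall w u G' a, List.In (w, u, (G', a)) (cedges C) -> models_lang G G' a w u).

Definition fracture (C : constr) (G : seq (rule E)) : constr :=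
  Constr (cverts C)
    (map (fun e => (e.1, ([seq p <- e.2.1 | p \notin G], e.2.2))) (cedges C)).

(* Horn rules: (true, a, s) is the forward rule h_f with string s,
   (false, a, s) the backward rule h_b. *)
Definition horn := (bool * E * seq (letter E))%type.

(* the production p with G(h) = {p, p̄} : a -> s (forward), ā -> s (backward) *)
Definition horn_rule (h : horn) : rule E := ((h.1.2, ~~ h.1.1), h.2).

Definition horn_sys (h : horn) : seq (rule E) := [:: horn_rule h; barr (horn_rule h)].

Definition hsys (H : seq horn) : seq (rule E) := flatten (map horn_sys H).

Definition horn_of_rule (p : rule E) : horn := (~~ p.1.2, p.1.1, p.2).

Definition H_of (G : seq (rule E)) : seq horn := map horn_of_rule G.

(* dependency graph on production pairs of G (pairs represented by either member) *)
Definition dep_step (G : seq (rule E)) (p q : rule E) : Prop :=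
  [/\ p \in G, q \in G, q != p, q != barr p & (q.1 \in p.2) || (q.1 \in bars p.2)].

Definition dep (G : seq (rule E)) : rule E -> rule E -> Prop := rtc (dep_step G).

Definition hdep (H : seq horn) (h h' : horn) : Prop :=
  dep (hsys H) (horn_rule h) (horn_rule h').

Definition fracturable (H H' : seq horn) : Prop :=
  {subset H' <= H} /\
  (forall h h', h \in H' -> h' \in H -> h' \notin H' -> ~ hdep H h h').

Definition horn_closed (H' : seq horn) (G : gseq) (R : E -> U -> U -> Prop) : Prop :=
  forall (fwd : bool) (a : E) (s : seq (letter E)) (w u : U),
    (fwd, a, s) \in H' -> gvert G w -> gvert G u -> walk R s w u ->
    (if fwd then R a w u else R a u w).

Definition sat_edge (H' : seq horn) (G : gseq) (a : E) (w u : U) : Prop :=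
  forall R : E -> U -> U -> Prop,
    (forall b x y, gedge G b x y -> R b x y) -> horn_closed H' G R -> R a w u.

Definition saturate (H' : seq horn) (G : gseq) : gseq :=
  GSeq (gvert G) (sat_edge H' G) (glab G).

End Defs.

(* Main.v *)
Require Import Defs.
From mathcomp Require Import all_boot.
From Stdlib Require List.

Lemma walk_cat (E : finType) (U : Type) (R : E -> U -> U -> Prop) A B w u :
  walk R (A ++ B) w u <-> exists v, walk R A w v /\ walk R B v u.
Proof.
elim: A w => [|x A IH] w /=.
  split; [move=> h; exists w; done | by case=> v [-> ]].
split.
  case=> v [hx /IH [v' [h1 h2]]]; exists v'; split => //; exists v; done.
case=> v' [[v [hx h1]] h2]; exists v; split=> //; apply/IH; exists v'; done.
Qed.

Lemma walk_mono (E : finType) (U : Type) (R1 R2 : E -> U -> U -> Prop) s w u :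
  (forall b x y, R1 b x y -> R2 b x y) -> walk R1 s w u -> walk R2 s w u.
Proof.
move=> H; elim: s w => [|x s IH] w //= [v [hx hw]]; exists v; split; last exact: IH.
by move: hx; rewrite /ledge; case: x.2; apply: H.
Qed.

Lemma walk_bars (E : finType) (U : Type) (R : E -> U -> U -> Prop) s w u :
  walk R (bars s) w u -> walk R s u w.
Proof.
elim: s w u => [|x s IH] w u /=; first by move=> ->.
rewrite /bars /= rev_cons -cats1 => /walk_cat [v [h1 [v' [hx ev]]]]; subst v'.
exists v; split; last exact: IH.
by move: hx; rewrite /ledge /barl /=; case: x.2.
Qed.

Arguments walk_bars {E U R s w u}.

Lemma cat_split {T : Type} (s1 s2 A B : seq T) x :
  s1 ++ x :: s2 = A ++ B ->
  (exists m, A = s1 ++ x :: m /\ s2 = m ++ B) \/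
  (exists m, B = m ++ x :: s2 /\ s1 = A ++ m).
Proof.
elim: s1 A => [|y s1 IH] [|z A] /=.
- by move=> <-; right; exists [::].
- by case=> -> ->; left; exists A.
- by move=> <-; right; exists (y :: s1).
- case=> -> /IH [[m [-> ->]]|[m [-> ->]]]; [left|right]; by exists m.
Qed.

Lemma lang_split (E : finType) (G : seq (rule E)) A B z :
  lang G (A ++ B) z -> exists A' B', [/\ z = A' ++ B', lang G A A' & lang G B B'].
Proof.
move Hs: (A ++ B) => s H; elim: H A B Hs => [x|x y z0 Hr Hrt IH] A B Hs.
  by exists A, B; split => //; apply: rtc_refl.
case: Hr => [s1 [s2 [x' [r [hm [ex ey]]]]]].
rewrite ex in Hs; case: (@cat_split _ _ _ _ _ _ (esym Hs)) => [[m [eA eB]]|[m [eB eA]]].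
- have [A' [B' [-> h1 h2]]] := IH (s1 ++ r ++ m) B (ltac:(by rewrite ey eB !catA)).
  exists A', B'; split => //; apply: rtc_step h1.
  by exists s1, m, x', r; rewrite eA.
- have [A' [B' [-> h1 h2]]] := IH A (m ++ r ++ s2) (ltac:(by rewrite ey eA !catA)).
  exists A', B'; split => //; apply: rtc_step h2.
  by exists m, s2, x', r; rewrite eB.
Qed.

Arguments lang_split {E G A B z}.

Lemma lang_trans (E : finType) (G : seq (rule E)) a b c :
  lang G a b -> lang G b c -> lang G a c.
Proof.
elim=> [//|x y z Hr _ IH] h; exact: rtc_step Hr (IH h).
Qed.

Arguments lang_trans {E G a b c}.

Lemma lang_catl (E : finType) (G : seq (rule E)) C A A' :
  lang G A A' -> lang G (C ++ A) (C ++ A').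
Proof.
elim=> [x|x y z [s1 [s2 [x' [r [hm [-> ->]]]]]] _ IH]; first exact: rtc_refl.
apply: rtc_step IH; exists (C ++ s1), s2, x', r; by rewrite !catA.
Qed.

Arguments lang_catl {E G} C {A A'}.

Lemma lang_catr (E : finType) (G : seq (rule E)) C A A' :
  lang G A A' -> lang G (A ++ C) (A' ++ C).
Proof.
elim=> [x|x y z [s1 [s2 [x' [r [hm [-> ->]]]]]] _ IH]; first exact: rtc_refl.
apply: rtc_step IH; exists s1, (s2 ++ C), x', r; by rewrite -!catA.
Qed.

Arguments lang_catr {E G} C {A A'}.

Lemma lang_frozen (E : finType) (G : seq (rule E)) r z :
  (forall q, q \in G -> q.1 \notin r) -> lang G r z -> z = r.
Proof.
move=> H hl; case: hl H => [//|x y z0 [s1 [s2 [x' [r0 [hm [ex ey]]]]]] _] H.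
by move: (H _ hm); rewrite /= ex mem_cat in_cons eqxx orbT.
Qed.

Arguments lang_frozen {E G r z}.

Lemma sat_vert (E : finType) (U S : Type) (G : gseq E U S) H' a w u :
  is_gseq G -> sat_edge H' G a w u -> gvert G w /\ gvert G u.
Proof.
move=> hg H; apply: (H (fun _ x y => gvert G x /\ gvert G y)).
- move=> b x y; exact: hg.
- by move=> fwd b s x y _ hx hy _; case: fwd.
Qed.

Arguments sat_vert {E U S G H' a w u}.

Lemma walk_vert (E : finType) (U S : Type) (G : gseq E U S) H' s w u :
  is_gseq G -> gvert G w -> walk (sat_edge H' G) s w u -> gvert G u.
Proof.
move=> hg; elim: s w => [|x s IH] w /=; first by move=> ? <-.
move=> gw [v [hx hw]]; apply: IH hw.
by move: hx; rewrite /ledge; case: x.2 => /(sat_vert hg) [].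
Qed.

Arguments walk_vert {E U S G H' s w u}.

Lemma sat_closed (E : finType) (U S : Type) (G : gseq E U S) H' :
  horn_closed H' G (sat_edge H' G).
Proof.
move=> fwd a s w u hin gw gu hw; case: fwd hin => hin R base cl;
have := cl _ a s w u hin gw gu; apply; apply: walk_mono hw => b x y; apply; done.
Qed.

Arguments sat_closed {E U S G H'}.

Lemma sat_base (E : finType) (U S : Type) (G : gseq E U S) H' b x y :
  gedge G b x y -> sat_edge H' G b x y.
Proof. by move=> h R base _; apply: base. Qed.

Arguments sat_base {E U S G} H' {b x y}.

Lemma in_hsys (E : finType) (H' : seq (horn E)) p :
  p \in hsys H' <-> exists2 h, h \in H' & (p = horn_rule h \/ p = barr (horn_rule h)).
Proof.
split.
  case/flatten_mapP => h hin; rewrite !inE => /orP [/eqP|/eqP] ->; exists h => //; by [left|right].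
case=> h hin e; apply/flatten_mapP; exists h => //; rewrite !inE.
by case: e => ->; rewrite eqxx ?orbT.
Qed.

Lemma rule_step (E : finType) (U S : Type) (G : gseq E U S) H' (p : rule E) v1 v2 :
  p \in hsys H' -> gvert G v1 -> gvert G v2 ->
  walk (sat_edge H' G) p.2 v1 v2 -> ledge (sat_edge H' G) p.1 v1 v2.
Proof.
case/in_hsys => [[[fwd a] s]] hin [->|->] g1 g2 /= hw.
- have := sat_closed _ _ _ _ _ hin g1 g2 hw; rewrite /ledge /=; by case: fwd hin.
- have := sat_closed _ _ _ _ _ hin g2 g1 (walk_bars hw); rewrite /ledge /=; by case: fwd hin.
Qed.

Arguments rule_step {E U S G H' p v1 v2}.

Lemma main_lang (E : finType) (U S : Type) (G : gseq E U S) (H' : seq (horn E))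
  (Gp : seq (rule E)) :
 is_gseq G ->
 (forall p q, p \in hsys H' -> q \in Gp -> q.1 \in p.2 -> q \in hsys H') ->
 forall s t w u, lang Gp s t -> gvert G w -> walk (sat_edge H' G) t w u ->
 exists s', lang [seq p <- Gp | p \notin hsys H'] s s' /\ walk (sat_edge H' G) s' w u.
Proof.
move=> hg hcl s t w u H; elim: H w u => [x|x y z Hr Hrt IH] w u gw hw.
  by exists x; split => //; apply: rtc_refl.
have [s1' [hl1 hw1]] := IH w u gw hw.
case: Hr => [s1 [s2 [x' [r [hm [ex ey]]]]]].
case hP: ((x', r) \in hsys H').
- rewrite ey in hl1.
  have [A' [Z [eZ hA hZ]]] := lang_split hl1.
  have [R' [B' [eR hR hB]]] := lang_split hZ.
  have eRr : R' = r.
    apply: lang_frozen hR => q; rewrite mem_filter => /andP [hq hqG].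
    apply/negP => hqr; move/negP: hq; apply.
    by apply: (hcl (x', r)) => //.
  rewrite eZ eR eRr in hw1.
  case/walk_cat: hw1 => v1 [hwA /walk_cat [v2 [hwr hwB]]].
  have g1 := walk_vert hg gw hwA.
  have g2 := walk_vert hg g1 hwr.
  have hx := rule_step hP g1 g2 hwr.
  exists (A' ++ x' :: B'); split.
    rewrite ex; apply: lang_trans (lang_catr (x' :: s2) hA) _.
    by apply: (lang_catl A' (lang_catl [:: x'] hB)).
  by apply/walk_cat; exists v1; split => //; exists v2.
- exists s1'; split => //; apply: rtc_step hl1.
  by exists s1, s2, x', r; split => //; rewrite mem_filter hP.
Qed.

Lemma horn_rule_of (E : finType) (q : rule E) : horn_rule (horn_of_rule q) = q.
Proof. by case: q => [[e b] r]; rewrite /horn_rule /horn_of_rule /= negbK. Qed.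

Lemma closure_lemma (E : finType) (U : Type) (C : constr E U) (H' : seq (horn E)) p q :
  fracturable (H_of (sys_of_constr C)) H' ->
  p \in hsys H' -> q \in sys_of_constr C -> q.1 \in p.2 -> q \in hsys H'.
Proof.
move=> [sub nd] /in_hsys [h hin ep] hq hx.
have hH : horn_of_rule q \in H_of (sys_of_constr C) by apply: map_f.
case hq': (horn_of_rule q \in H').
  apply/in_hsys; exists (horn_of_rule q) => //; left; by rewrite horn_rule_of.
case e1: (q == horn_rule h).
  apply/in_hsys; exists h => //; left; exact/eqP.
case e2: (q == barr (horn_rule h)).
  apply/in_hsys; exists h => //; right; exact/eqP.
exfalso; apply: (nd h (horn_of_rule q) hin hH (negbT hq')).
rewrite /hdep horn_rule_of.
apply: rtc_step; last apply: rtc_refl.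
split.
- apply/in_hsys; exists h; [exact: sub | by left].
- apply/in_hsys; exists (horn_of_rule q) => //; left; by rewrite horn_rule_of.
- by rewrite e1.
- by rewrite e2.
- by case: ep => ep; subst p; [rewrite hx | rewrite /= hx orbT].
Qed.

Arguments closure_lemma {E U C H' p q}.

Lemma in_flatten_list (A : Type) (T : eqType) (f : A -> seq T) (l : seq A) e x :
  List.In e l -> x \in f e -> x \in flatten (map f l).
Proof.
elim: l => [//|a l IH] /= [->|hi] hx; rewrite mem_cat ?hx //.
by rewrite IH ?orbT.
Qed.

Arguments in_flatten_list {A T} f {l e x}.
Arguments main_lang {E U S G H' Gp} hg hcl {s t w u}.
Arguments walk_mono {E U R1 R2 s w u}.

Theorem mainTheorem7 (E : finType) (U S : Type) (G : gseq E U S) (C : constr E U)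
  (H' : seq (horn E)) :
  (0 < #|E|)%N ->
  is_gseq G ->
  is_constraint C ->
  fracturable (H_of (sys_of_constr C)) H' ->
  satisfies G C ->
  satisfies (saturate H' G) (fracture C (hsys H')).
Proof.
move=> _ hg [htree _] hfr [hv he]; split => //=.
move=> w u G'' a /List.in_map_iff [[[w0 u0] [G' a0]] [ee hin]].
case: ee => <- <- <- <-.
have [t [hl hw]] := he w0 u0 G' a0 hin.
have gw : gvert G w0.
  case: htree => _ _ hE _ _; exact: hv _ (proj1 (hE _ _ _ hin)).
have hcl : forall p q, p \in hsys H' -> q \in G' -> q.1 \in p.2 -> q \in hsys H'.
  move=> p q hp hq hx; apply: (closure_lemma hfr hp _ hx).
  exact: (in_flatten_list (fun e => e.2.1) hin hq).
have [s' [hl' hw']] := main_lang hg hcl hl gw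
  (walk_mono (fun b x y (h : gedge G b x y) => sat_base H' h) hw).
by exists s'.
Qed.
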